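(* Let $T$ be a Cartesian tree with $n$ nodes whose left subtree $A$ has $k-1$ nodes and whose right subtree $B$ has $n-k$ nodes. Then $|ng(T)|=|ng(A)|+|ng(B)|+|ng(T,k-1)|+|ng(T,k)|$.
   Context: Sequences are finite sequences of pairwise distinct integers indexed from $1$. The Cartesian tree $C(x)$ of a sequence $x$ of length $n$ is empty if $n=0$; otherwise, if $x[i]$ is the minimum of $x$, it is the binary tree with root $i$ (nodes labelled by positions), left subtree $C(x[1\ldots i-1])$ and right subtree $C(x[i+1\ldots n])$; Cartesian trees with $n$ nodes are exactly the binary trees with $n$ nodes. For $1\le i\le n-1$, $\tau(x,i)$ is obtained from $x$ by exchanging $x[i]$ and $x[i+1]$. For a Cartesian tree $T$ with $n$ nodes and $1\le i\le n-1$, $ng(T,i)=\{C(\tau(x,i)) : x \text{ a sequence with } C(x)=T\}$, with $ng(T,i)=\emptyset$ for $i\notin\{1,\ldots,n-1\}$, and $ng(T)=\bigcup_{i=1}^{n-1}ng(T,i)$ (so $ng$ of the empty tree or of a single node is empty). *)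

(* Defs.v *)
From Stdlib Require Import List ZArith Lia.
Import ListNotations.
Open Scope Z_scope.

(* Unlabelled binary trees.  A Cartesian tree's node labels are positions,
   which are exactly the in-order ranks of the nodes, so the shape determines
   the labelled tree. *)
Inductive bt : Type := Leaf | Node (l r : bt).

Fixpoint tsize (t : bt) : nat :=
  match t with Leaf => 0%nat | Node l r => S (tsize l + tsize r) end.

Fixpoint min_idx_aux (x : list Z) (i bi : nat) (bv : Z) : nat :=
  match x with
  | [] => bi
  | y :: ys => if y <? bv then min_idx_aux ys (S i) i y
               else min_idx_aux ys (S i) bi bv
  end.

Definition min_idx (x : list Z) : nat :=
  match x with [] => 0%nat | y :: ys => min_idx_aux ys 1 0 y end.

(* Cartesian tree with fuel; the fuel length x always suffices. *)
Fixpoint cart_aux (fuel : nat) (x : list Z) : bt :=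
  match fuel with
  | O => Leaf
  | S f =>
    match x with
    | [] => Leaf
    | _ => let i := min_idx x in
           Node (cart_aux f (firstn i x)) (cart_aux f (skipn (S i) x))
    end
  end.

Definition cart (x : list Z) : bt := cart_aux (length x) x.

(* tau(x,i): exchange x[i] and x[i+1] (1-indexed positions, 1 <= i <= n-1). *)
Definition tau (x : list Z) (i : nat) : list Z :=
  firstn (i - 1) x ++ [nth i x 0; nth (i - 1) x 0] ++ skipn (S i) x.

(* t \in ng(T,i); empty unless 1 <= i <= n-1 with n the number of nodes of T.
   Sequences are finite lists of pairwise distinct integers. *)
Definition ngi (T : bt) (i : nat) (t : bt) : Prop :=
  (1 <= i <= tsize T - 1)%nat /\
  exists x : list Z, NoDup x /\ cart x = T /\ cart (tau x i) = t.

Definition ng (T : bt) (t : bt) : Prop :=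
  exists i : nat, (1 <= i <= tsize T - 1)%nat /\ ngi T i t.

Definition card_of (P : bt -> Prop) (m : nat) : Prop :=
  exists s : list bt, NoDup s /\ length s = m /\ forall t, P t <-> In t s.

(* Main.v *)
Require Import Defs.
From Stdlib Require Import List ZArith Lia Permutation Classical.
Import ListNotations.
Open Scope Z_scope.

Definition below (m : Z) (l : list Z) := forall z, In z l -> m < z.
Definition sh (c z : Z) := z + c.

Lemma aux_gt : forall d i bi bv, (forall z, In z d -> bv < z) -> min_idx_aux d i bi bv = bi.
Proof.
  induction d as [|y d IH]; intros i bi bv H; simpl; auto.
  destruct (y <? bv) eqn:E.
  - apply Z.ltb_lt in E. specialize (H y (or_introl eq_refl)). lia.
  - apply IH. intros; apply H; simpl; auto.
Qed.

Lemma aux_split : forall c m d i bi bv, m < bv -> (forall z, In z c -> m < z) ->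
  (forall z, In z d -> m < z) ->
  min_idx_aux (c ++ m :: d) i bi bv = (i + length c)%nat.
Proof.
  induction c as [|y c IH]; intros m d i bi bv Hb Hc Hd; simpl.
  - assert (E: m <? bv = true) by (apply Z.ltb_lt; lia). rewrite E.
    rewrite aux_gt; [lia|auto].
  - assert (Hy : m < y) by (apply Hc; simpl; auto).
    destruct (y <? bv); rewrite IH; auto; try (intros; apply Hc; simpl; auto); lia.
Qed.

Lemma min_idx_split : forall a m b, below m (a ++ b) -> min_idx (a ++ m :: b) = length a.
Proof.
  intros [|y a] m b H; simpl.
  - apply aux_gt. intros z Hz; apply H; auto.
  - rewrite aux_split; [lia| | |].
    + apply H; simpl; auto.
    + intros; apply H; simpl; rewrite in_app_iff; auto.
    + intros; apply H; simpl; rewrite in_app_iff; auto.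
Qed.

Lemma aux_lt : forall d i bi bv, (bi < i)%nat -> (min_idx_aux d i bi bv < i + length d)%nat.
Proof.
  induction d as [|y d IH]; intros i bi bv H; simpl; [lia|].
  destruct (y <? bv); eapply Nat.lt_le_trans; try apply IH; lia.
Qed.

Lemma min_idx_lt : forall x, x <> [] -> (min_idx x < length x)%nat.
Proof.
  intros [|y x] H; [congruence|]. simpl. pose proof (aux_lt x 1 0 y). lia.
Qed.

Lemma cart_aux_cons : forall f x, x <> [] -> cart_aux (S f) x =
  Node (cart_aux f (firstn (min_idx x) x)) (cart_aux f (skipn (S (min_idx x)) x)).
Proof. intros f [|y x] H; [congruence|reflexivity]. Qed.

Lemma fuel : forall f1 f2 y, (length y <= f1)%nat -> (length y <= f2)%nat ->
  cart_aux f1 y = cart_aux f2 y.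
Proof.
  induction f1 as [|f1 IH]; intros f2 y H1 H2.
  - destruct y; simpl in H1; [destruct f2; reflexivity | lia].
  - destruct y as [|z y']; [destruct f2; reflexivity|].
    destruct f2 as [|f2]; [simpl in H2; lia|].
    assert (Hne : z :: y' <> []) by discriminate.
    rewrite !cart_aux_cons by exact Hne.
    pose proof (min_idx_lt _ Hne).
    f_equal; apply IH; rewrite ?length_firstn, ?length_skipn; lia.
Qed.

Lemma cart_fuel : forall f y, (length y <= f)%nat -> cart_aux f y = cart y.
Proof. intros; unfold cart; apply fuel; lia. Qed.

Lemma tsize_aux : forall f x, (length x <= f)%nat -> tsize (cart_aux f x) = length x.
Proof.
  induction f as [|f IH]; intros x H.
  - destruct x; simpl in *; [reflexivity|lia].
  - destruct x as [|z y']; [reflexivity|].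
    assert (Hne : z :: y' <> []) by discriminate.
    rewrite cart_aux_cons by exact Hne. pose proof (min_idx_lt _ Hne).
    set (i := min_idx (z :: y')) in *. simpl tsize. rewrite !IH; rewrite ?length_firstn, ?length_skipn; simpl length in *; lia.
Qed.

Lemma tsize_cart : forall x, tsize (cart x) = length x.
Proof. intros; unfold cart; apply tsize_aux; lia. Qed.

Lemma firstn_len : forall (p l : list Z), firstn (length p) (p ++ l) = p.
Proof. induction p; simpl; intros; f_equal; auto. Qed.
Lemma skipn_len1 : forall (p l : list Z) m, skipn (S (length p)) (p ++ m :: l) = l.
Proof. induction p; simpl; intros; auto. apply IHp. Qed.

Lemma cart_split : forall a m b, below m (a ++ b) -> cart (a ++ m :: b) = Node (cart a) (cart b).
Proof.
  intros a m b H. unfold cart at 1. rewrite length_app. simpl length.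
  replace (length a + S (length b))%nat with (S (length a + length b)) by lia.
  rewrite cart_aux_cons by (destruct a; discriminate).
  rewrite min_idx_split by auto. rewrite firstn_len, skipn_len1.
  f_equal; apply cart_fuel; lia.
Qed.

Lemma ltb_sh : forall c x y, (sh c x <? sh c y) = (x <? y).
Proof. intros; unfold sh; destruct (Z.ltb_spec (x + c) (y + c)); destruct (Z.ltb_spec x y); lia. Qed.

Lemma aux_map : forall c d i bi bv, min_idx_aux (map (sh c) d) i bi (sh c bv) = min_idx_aux d i bi bv.
Proof.
  induction d as [|y d IH]; intros; simpl; auto. rewrite ltb_sh.
  destruct (y <? bv); auto.
Qed.

Lemma min_idx_map : forall c x, min_idx (map (sh c) x) = min_idx x.
Proof. intros c [|y x]; simpl; auto. apply aux_map. Qed.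

Lemma cart_aux_map : forall c f x, cart_aux f (map (sh c) x) = cart_aux f x.
Proof.
  induction f as [|f IH]; intros x; [reflexivity|].
  destruct x as [|z y]; [reflexivity|].
  rewrite !cart_aux_cons by discriminate.
  rewrite min_idx_map, firstn_map, skipn_map, !IH. reflexivity.
Qed.

Lemma cart_shift : forall c x, cart (map (sh c) x) = cart x.
Proof. intros; unfold cart; rewrite length_map; apply cart_aux_map. Qed.

Lemma min_dec : forall x, NoDup x -> x <> [] ->
  exists a m b, x = a ++ m :: b /\ below m (a ++ b).
Proof.
  induction x as [|y x IH]; intros Hnd Hne; [congruence|].
  apply NoDup_cons_iff in Hnd as [Hy Hnd].
  destruct x as [|y2 x'].
  - exists [], y, []. split; auto. intros z Hz; inversion Hz.
  - destruct (IH Hnd ltac:(discriminate)) as [a [m [b [E Hb]]]].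
    destruct (Z.lt_ge_cases y m) as [Hl|Hg].
    + exists [], y, (y2 :: x'). split; auto. simpl. intros z Hz.
      rewrite E in Hz. apply in_app_or in Hz. destruct Hz as [Hz|[<-|Hz]]; try lia;
      (assert (m < z) by (apply Hb; apply in_or_app; auto); lia).
    + assert (y <> m). { intro; subst. apply Hy. rewrite E. apply in_or_app. simpl; auto. }
      exists (y :: a), m, b. split. rewrite E; reflexivity.
      intros z [<-|Hz]; [lia|]. apply Hb; auto.
Qed.

Lemma bounds : forall l : list Z, exists L U, L <= U /\ forall z, In z l -> L <= z <= U.
Proof.
  induction l as [|a l IH]. exists 0, 0. simpl; split; [lia|tauto].
  destruct IH as [L [U [HLU H]]]. exists (Z.min L a), (Z.max U a). split; [lia|].
  intros z [->|Hz]; [lia|]. specialize (H z Hz); lia.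
Qed.

Lemma glue : forall a b, NoDup a -> NoDup b -> exists c1 c2 m,
  NoDup (map (sh c1) a ++ m :: map (sh c2) b) /\ below m (map (sh c1) a ++ map (sh c2) b).
Proof.
  intros a b Ha Hb.
  destruct (bounds a) as [La [Ua [H1 Ba]]]. destruct (bounds b) as [Lb [Ub [H2 Bb]]].
  exists (1 - La), (Ua - La + 2 - Lb), 0. split.
  - apply NoDup_app.
    + apply FinFun.Injective_map_NoDup; auto. intros x y; unfold sh; lia.
    + constructor.
      * intro H. apply in_map_iff in H as [w [Hw Iw]]. specialize (Bb w Iw). unfold sh in Hw. lia.
      * apply FinFun.Injective_map_NoDup; auto. intros x y; unfold sh; lia.
    + intros z Hz Hz'. apply in_map_iff in Hz as [w [Hw Iw]]. specialize (Ba w Iw).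
      unfold sh in Hw. destruct Hz' as [Hz'|Hz']; [lia|].
      apply in_map_iff in Hz' as [w' [Hw' Iw']]. specialize (Bb w' Iw'). unfold sh in Hw'. lia.
  - intros z Hz. apply in_app_or in Hz as [Hz|Hz]; apply in_map_iff in Hz as [w [Hw Iw]];
      unfold sh in Hw.
    + specialize (Ba w Iw); lia.
    + specialize (Bb w Iw); lia.
Qed.

Lemma realize : forall T, exists x, NoDup x /\ cart x = T.
Proof.
  induction T as [|A [a [Ha HA]] B [b [Hb HB]]].
  - exists []. split; [constructor|reflexivity].
  - destruct (glue a b Ha Hb) as [c1 [c2 [m [Hn Hbl]]]].
    eexists. split; [exact Hn|]. rewrite cart_split by exact Hbl.
    rewrite !cart_shift; congruence.
Qed.

Lemma nth_len1 : forall (p l : list Z) u v d, nth (S (length p)) (p ++ u :: v :: l) d = v.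
Proof. induction p; simpl; intros; auto. Qed.
Lemma nth_len0 : forall (p l : list Z) u d, nth (length p) (p ++ u :: l) d = u.
Proof. induction p; simpl; intros; auto. Qed.
Lemma skipn_len2 : forall (p l : list Z) u v, skipn (S (S (length p))) (p ++ u :: v :: l) = l.
Proof. induction p; simpl; intros; auto. apply IHp. Qed.

Lemma tau_app : forall p u v q, tau (p ++ u :: v :: q) (S (length p)) = p ++ v :: u :: q.
Proof.
  intros. unfold tau. replace (S (length p) - 1)%nat with (length p) by lia.
  rewrite firstn_len, nth_len1, nth_len0, skipn_len2. reflexivity.
Qed.

Lemma decomp4 : forall j (x : list Z), (S j < length x)%nat ->
  exists p u v q, x = p ++ u :: v :: q /\ length p = j.
Proof.
  induction j as [|j IH]; intros x H.
  - destruct x as [|u [|v q]]; simpl in H; try lia. exists [], u, v, q; auto.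
  - destruct x as [|y x]; simpl in H; [lia|].
    destruct (IH x ltac:(lia)) as [p [u [v [q [E L]]]]].
    exists (y :: p), u, v, q. subst. simpl. auto.
Qed.

Lemma ngi_alt : forall T i t, ngi T i t <-> (1 <= i <= tsize T - 1)%nat /\
  exists p u v q, NoDup (p ++ u :: v :: q) /\ S (length p) = i /\
    cart (p ++ u :: v :: q) = T /\ cart (p ++ v :: u :: q) = t.
Proof.
  intros T i t. split.
  - intros [Hi [x [Hnd [Hc Ht]]]]. split; auto.
    assert (Hl : tsize T = length x) by (rewrite <- Hc; apply tsize_cart).
    destruct i as [|j]; [lia|].
    destruct (decomp4 j x ltac:(lia)) as [p [u [v [q [E L]]]]]. subst x.
    exists p, u, v, q. rewrite <- L, tau_app in Ht. auto.
  - intros [Hi [p [u [v [q [Hnd [Hl [Hc Ht]]]]]]]]. split; auto.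
    exists (p ++ u :: v :: q). subst i. rewrite tau_app. auto.
Qed.

Lemma split_at : forall (l1 r1 l2 r2 : list Z), l1 ++ r1 = l2 ++ r2 ->
  (length l1 <= length l2)%nat -> exists w, l2 = l1 ++ w /\ r1 = w ++ r2.
Proof.
  induction l1 as [|x l1 IH]; intros r1 l2 r2 H Hl.
  - exists l2. auto.
  - destruct l2 as [|y l2]; simpl in Hl; [lia|]. simpl in H. injection H; intros H' ->.
    destruct (IH r1 l2 r2 H' ltac:(lia)) as [w [E1 E2]]. exists w. subst. auto.
Qed.

Lemma ngi_size : forall T i t, ngi T i t -> tsize t = tsize T.
Proof.
  intros T i t H. apply ngi_alt in H as [_ [p [u [v [q [_ [_ [Hc Ht]]]]]]]].
  subst. rewrite !tsize_cart, !length_app. reflexivity.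
Qed.

Lemma ng_size : forall T t, ng T t -> tsize t = tsize T.
Proof. intros T t [i [_ H]]. eapply ngi_size; eauto. Qed.

Lemma node_dec : forall A B x, NoDup x -> cart x = Node A B -> exists a m b,
  x = a ++ m :: b /\ below m (a ++ b) /\ cart a = A /\ cart b = B /\
  length a = tsize A /\ length b = tsize B.
Proof.
  intros A B x Hnd Hc. destruct x as [|y x']; [discriminate|].
  destruct (min_dec _ Hnd ltac:(discriminate)) as [a [m [b [E Hb]]]].
  rewrite E, cart_split in Hc by auto. injection Hc; intros HB HA.
  exists a, m, b. repeat split; auto; [rewrite <- HA | rewrite <- HB]; symmetry; apply tsize_cart.
Qed.

Lemma below_swap : forall m p u v q r, below m ((p ++ u :: v :: q) ++ r) ->
  below m ((p ++ v :: u :: q) ++ r).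
Proof.
  intros m p u v q r H z Hz. apply H. rewrite !in_app_iff in *. simpl in *. tauto.
Qed.

Lemma map_eq4 : forall c1 p u v q m (r : list Z),
  map (sh c1) (p ++ u :: v :: q) ++ m :: r =
  map (sh c1) p ++ sh c1 u :: sh c1 v :: (map (sh c1) q ++ m :: r).
Proof. intros. rewrite map_app. simpl. rewrite <- app_assoc. reflexivity. Qed.

Lemma map_eq4' : forall c1 c2 a m p u v q,
  map (sh c1) a ++ m :: map (sh c2) (p ++ u :: v :: q) =
  (map (sh c1) a ++ m :: map (sh c2) p) ++ sh c2 u :: sh c2 v :: map (sh c2) q.
Proof. intros. rewrite map_app. simpl. rewrite <- app_assoc. reflexivity. Qed.

Lemma L1 : forall A B i t, (S i <= tsize A)%nat ->
  (ngi (Node A B) i t <-> exists A', ngi A i A' /\ t = Node A' B).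
Proof.
  intros A B i t Hi. split.
  - intros H. apply ngi_alt in H as [Hr [p [u [v [q [Hnd [Hl [Hc Ht]]]]]]]].
    destruct (node_dec _ _ _ Hnd Hc) as [a [m [b [E [Hb [HA [HB [La Lb]]]]]]]].
    assert (Hna : NoDup a) by (rewrite E in Hnd; eapply NoDup_app_remove_r; eauto).
    destruct (split_at p (u :: v :: q) a (m :: b) E ltac:(lia)) as [w [Ea Ew]].
    subst a. rewrite length_app in La.
    destruct w as [|u' [|v' q']]; simpl in La; try lia.
    simpl in Ew. injection Ew; intros Eq Ev Eu. subst u' v' q.
    exists (cart (p ++ v :: u :: q')). split.
    + apply ngi_alt. split; [lia|]. exists p, u, v, q'. auto.
    + rewrite <- Ht. replace (p ++ v :: u :: q' ++ m :: b) with ((p ++ v :: u :: q') ++ m :: b)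
        by (rewrite <- app_assoc; reflexivity).
      rewrite cart_split by (apply below_swap; auto). congruence.
  - intros [A' [H ->]]. apply ngi_alt in H as [Hr [p [u [v [q [Hnd [Hl [Hc Ht]]]]]]]].
    destruct (realize B) as [b [Hnb HB]].
    destruct (glue _ _ Hnd Hnb) as [c1 [c2 [m [Hnd' Hb']]]].
    apply ngi_alt. split; [simpl; lia|].
    exists (map (sh c1) p), (sh c1 u), (sh c1 v), (map (sh c1) q ++ m :: map (sh c2) b).
    rewrite <- !map_eq4. split; [auto|]. split; [rewrite length_map; auto|]. split.
    + rewrite cart_split, !cart_shift by auto. congruence.
    + rewrite cart_split, !cart_shift. congruence.
      intros z Hz. apply Hb'. rewrite !in_app_iff, !in_map_iff in *.
      destruct Hz as [[w [Hw Iw]]|Hz]; [left|right; auto].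
      exists w; split; auto. rewrite in_app_iff in *; simpl in *; tauto.
Qed.

Lemma L2 : forall A B i t, (S (S (tsize A)) <= i)%nat ->
  (ngi (Node A B) i t <-> exists B', ngi B (i - S (tsize A)) B' /\ t = Node A B').
Proof.
  intros A B i t Hi. split.
  - intros H. apply ngi_alt in H as [Hr [p [u [v [q [Hnd [Hl [Hc Ht]]]]]]]].
    destruct (node_dec _ _ _ Hnd Hc) as [a [m [b [E [Hb [HA [HB [La Lb]]]]]]]].
    assert (Hnb : NoDup b).
    { rewrite E in Hnd. apply NoDup_app_remove_l in Hnd. inversion Hnd; auto. }
    assert (E' : (a ++ [m]) ++ b = p ++ u :: v :: q) by (rewrite <- app_assoc; auto).
    destruct (split_at (a ++ [m]) b p (u :: v :: q) E' ltac:(rewrite length_app; simpl; lia))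
      as [w [Ep Ew]].
    subst p b. rewrite !length_app in Hl. simpl in Hl, Hr.
    rewrite !length_app in Lb. simpl in Lb.
    exists (cart (w ++ v :: u :: q)). split.
    + apply ngi_alt. split; [lia|]. exists w, u, v, q. repeat split; auto. lia.
    + rewrite <- Ht. rewrite <- !app_assoc. simpl. rewrite (cart_split a m). congruence.
      intros z Hz. apply Hb. rewrite !in_app_iff in *. simpl in *. tauto.
  - intros [B' [H ->]]. apply ngi_alt in H as [Hr [p [u [v [q [Hnd [Hl [Hc Ht]]]]]]]].
    destruct (realize A) as [a [Hna HA]].
    destruct (glue _ _ Hna Hnd) as [c1 [c2 [m [Hnd' Hb']]]].
    apply ngi_alt. split; [simpl; lia|].
    exists (map (sh c1) a ++ m :: map (sh c2) p), (sh c2 u), (sh c2 v), (map (sh c2) q).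
    rewrite <- !map_eq4'. split; [auto|].
    split; [rewrite length_app; simpl; rewrite !length_map;
            rewrite <- (tsize_cart a), HA; lia|]. split.
    + rewrite cart_split, !cart_shift by auto. congruence.
    + rewrite cart_split, !cart_shift. congruence.
      intros z Hz. apply Hb'. rewrite !in_app_iff, !in_map_iff in *.
      destruct Hz as [Hz|[w [Hw Iw]]]; [left; auto|right].
      exists w; split; auto. rewrite in_app_iff in *; simpl in *; tauto.
Qed.

Lemma L3 : forall A B t, ngi (Node A B) (tsize A) t ->
  exists L R, t = Node L R /\ S (tsize L) = tsize A.
Proof.
  intros A B t H. apply ngi_alt in H as [Hr [p [u [v [q [Hnd [Hl [Hc Ht]]]]]]]].
  destruct (node_dec _ _ _ Hnd Hc) as [a [m [b [E [Hb [HA [HB [La Lb]]]]]]]].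
  destruct (split_at p (u :: v :: q) a (m :: b) E ltac:(lia)) as [w [Ea Ew]].
  subst a. rewrite length_app in La.
  destruct w as [|u' [|v' q']]; simpl in La; try lia.
  simpl in Ew. injection Ew; intros Eq Ev Eu. subst u v q.
  rewrite (cart_split p m) in Ht. eexists; eexists; split; [symmetry; exact Ht|].
  rewrite tsize_cart. lia.
  intros z Hz. apply Hb. rewrite !in_app_iff in *. simpl in *. tauto.
Qed.

Lemma L4 : forall A B t, ngi (Node A B) (S (tsize A)) t ->
  exists L R, t = Node L R /\ tsize L = S (tsize A).
Proof.
  intros A B t H. apply ngi_alt in H as [Hr [p [u [v [q [Hnd [Hl [Hc Ht]]]]]]]].
  destruct (node_dec _ _ _ Hnd Hc) as [a [m [b [E [Hb [HA [HB [La Lb]]]]]]]].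
  destruct (split_at p (u :: v :: q) a (m :: b) E ltac:(lia)) as [w [Ea Ew]].
  subst a. rewrite length_app in La.
  destruct w as [|u' w']; simpl in La; try lia.
  simpl in Ew. injection Ew; intros Eq Eu. subst u b.
  replace (p ++ v :: m :: q) with ((p ++ [v]) ++ m :: q) in Ht
    by (rewrite <- app_assoc; reflexivity).
  rewrite (cart_split (p ++ [v]) m) in Ht. eexists; eexists; split; [symmetry; exact Ht|].
  rewrite tsize_cart, length_app. simpl. lia.
  intros z Hz. apply Hb. rewrite !in_app_iff in *. simpl in *. tauto.
Qed.

Lemma ng_char : forall A B t, ng (Node A B) t <->
  (exists A', ng A A' /\ t = Node A' B) \/ (exists B', ng B B' /\ t = Node A B') \/
  ngi (Node A B) (tsize A) t \/ ngi (Node A B) (S (tsize A)) t.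
Proof.
  intros A B t. split.
  - intros [i [Hi H]].
    assert (C : (i < tsize A \/ i = tsize A \/ i = S (tsize A) \/ S (S (tsize A)) <= i)%nat) by lia.
    destruct C as [C|[C|[C|C]]].
    + apply L1 in H; [|lia]. destruct H as [A' [HA ->]]. left. exists A'. split; auto.
      exists i. split; auto. destruct HA; auto.
    + subst; tauto.
    + subst; tauto.
    + apply L2 in H; [|lia]. destruct H as [B' [HB ->]]. right; left. exists B'. split; auto.
      exists (i - S (tsize A))%nat. split; auto. destruct HB; auto.
  - intros [[A' [[i [Hi HA]] ->]]|[[B' [[j [Hj HB]] ->]]|[H|H]]].
    + exists i. split; [simpl; lia|]. apply L1; [lia|]. exists A'; auto.
    + exists (j + S (tsize A))%nat. split; [simpl; lia|]. apply L2; [lia|]. exists B'.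
      replace (j + S (tsize A) - S (tsize A))%nat with j by lia. auto.
    + exists (tsize A). split; auto. destruct H; auto.
    + exists (S (tsize A)). split; auto. destruct H; auto.
Qed.

Lemma no_self : forall T, ~ ng T T.
Proof.
  induction T as [|A IHA B IHB].
  - intros [i [Hi _]]. simpl in Hi. lia.
  - intros H. apply ng_char in H.
    destruct H as [[A' [HA E]]|[[B' [HB E]]|[H|H]]].
    + injection E; intros; subst. auto.
    + injection E; intros; subst. auto.
    + apply L3 in H. destruct H as [L [R [E HL]]]. injection E; intros; subst. lia.
    + apply L4 in H. destruct H as [L [R [E HL]]]. injection E; intros; subst. lia.
Qed.

Lemma trees_upto : forall m, exists L, forall t, (tsize t <= m)%nat -> In t L.
Proof.
  induction m as [|m [L HL]].
  - exists [Leaf]. intros [|l r] H; simpl in *; [auto|lia].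
  - exists (Leaf :: flat_map (fun l => map (fun r => Node l r) L) L).
    intros [|l r] H; simpl; [auto|right]. simpl in H.
    apply in_flat_map. exists l. split; [apply HL; lia|]. apply in_map. apply HL; lia.
Qed.

Lemma finite_card : forall P : bt -> Prop, (exists L, forall t, P t -> In t L) ->
  exists m, card_of P m.
Proof.
  intros P [L HL].
  assert (S : forall L, exists s, NoDup s /\ forall t, (P t /\ In t L) <-> In t s).
  { clear L HL. induction L as [|a L [s [Hs Hi]]].
    - exists []. split; [constructor|simpl; tauto].
    - destruct (classic (P a /\ ~ In a s)) as [[Pa Na]|Hn].
      + exists (a :: s). split; [constructor; auto|]. intros t. simpl. rewrite <- Hi. split.
        * intros [Pt [->|It]]; auto.
        * intros [<-|Hts]; tauto.
      + exists s. split; auto. intro t. simpl. split.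
        * intros [Pt [Ea|It]]; [|apply Hi; tauto]. subst t.
          destruct (classic (In a s)) as [I|NI]; auto. exfalso; apply Hn; auto.
        * intros I. pose proof (proj2 (Hi t) I). tauto. }
  destruct (S L) as [s [Hs Hi]]. exists (length s), s. repeat split; auto.
  - intros Pt. apply Hi. auto.
  - intros Is. apply Hi in Is. tauto.
Qed.

Lemma fin_size : forall (P : bt -> Prop) N, (forall t, P t -> tsize t = N) -> exists m, card_of P m.
Proof.
  intros P N H. apply finite_card. destruct (trees_upto N) as [L HL]. exists L.
  intros t Pt. apply HL. rewrite (H t Pt). lia.
Qed.

Lemma card_ext : forall (P Q : bt -> Prop) m, (forall t, P t <-> Q t) -> card_of P m -> card_of Q m.
Proof.
  intros P Q m H [s [Hs [Hl Hi]]]. exists s. repeat split; auto.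
  - intros; apply Hi, H; auto.
  - intros; apply H, Hi; auto.
Qed.

Lemma card_union : forall (P Q : bt -> Prop) a b, card_of P a -> card_of Q b ->
  (forall t, P t -> Q t -> False) -> card_of (fun t => P t \/ Q t) (a + b).
Proof.
  intros P Q a b [s1 [N1 [L1' I1]]] [s2 [N2 [L2' I2]]] D. exists (s1 ++ s2). repeat split.
  - apply NoDup_app; auto. intros x H1 H2. apply I1 in H1; apply I2 in H2. eauto.
  - rewrite length_app; lia.
  - intros [H|H]; apply in_or_app; [left; apply I1 | right; apply I2]; auto.
  - intros H. apply in_app_or in H as [H|H]; [left; apply I1 | right; apply I2]; auto.
Qed.

Lemma card_image : forall (P : bt -> Prop) (f : bt -> bt) a, card_of P a ->
  (forall x y, f x = f y -> x = y) -> card_of (fun t => exists u, P u /\ t = f u) a.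
Proof.
  intros P f a [s [N [L I]]] Hf. exists (map f s). repeat split.
  - apply FinFun.Injective_map_NoDup; auto.
  - rewrite length_map; auto.
  - intros [u [Pu ->]]. apply in_map. apply I; auto.
  - intros H. apply in_map_iff in H as [u [<- Iu]]. exists u. split; auto. apply I; auto.
Qed.

Theorem lemma7 (n k : nat) (T A B : bt) :
  T = Node A B -> tsize T = n -> tsize A = (k - 1)%nat -> tsize B = (n - k)%nat ->
  exists a b c d : nat,
    card_of (ng A) a /\ card_of (ng B) b /\
    card_of (ngi T (k - 1)) c /\ card_of (ngi T k) d /\
    card_of (ng T) (a + b + c + d).
Proof.
  intros HT Hn Ha Hb. subst T. simpl in Hn.
  assert (Hk : k = S (tsize A)) by lia. subst k.
  replace (S (tsize A) - 1)%nat with (tsize A) by lia.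
  destruct (fin_size (ng A) (tsize A) (ng_size A)) as [a Ca].
  destruct (fin_size (ng B) (tsize B) (ng_size B)) as [b Cb].
  destruct (fin_size (ngi (Node A B) (tsize A)) _ (fun t => ngi_size _ _ t)) as [c Cc].
  destruct (fin_size (ngi (Node A B) (S (tsize A))) _ (fun t => ngi_size _ _ t)) as [d Cd].
  exists a, b, c, d. repeat split; auto.
  replace (a + b + c + d)%nat with (a + (b + (c + d)))%nat by lia.
  apply (card_ext (fun t =>
    (exists A', ng A A' /\ t = Node A' B) \/ (exists B', ng B B' /\ t = Node A B') \/
    ngi (Node A B) (tsize A) t \/ ngi (Node A B) (S (tsize A)) t));
    [intro t; rewrite ng_char; reflexivity|].
  apply card_union.
  - apply (card_image (ng A) (fun A' => Node A' B)); auto. intros x y E; injection E; auto.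
  - apply card_union.
    + apply (card_image (ng B) (fun B' => Node A B')); auto. intros x y E; injection E; auto.
    + apply card_union; auto.
      intros t H3 H4. apply L3 in H3 as [L [R [E HL]]]. apply L4 in H4 as [L' [R' [E' HL']]].
      subst. injection E'; intros; subst. lia.
    + intros t [B' [HB' ->]] [H|H].
      * apply L3 in H as [L [R [E HL]]]. injection E; intros; subst. lia.
      * apply L4 in H as [L [R [E HL]]]. injection E; intros; subst. lia.
  - intros t [A' [HA' ->]] [[B' [HB' E]]|[H|H]].
    + injection E; intros; subst. eapply no_self; eauto.
    + apply ng_size in HA'. apply L3 in H as [L [R [E HL]]]. injection E; intros; subst. lia.
    + apply ng_size in HA'. apply L4 in H as [L [R [E HL]]]. injection E; intros; subst. lia.
Qed.
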